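(* Let $L\neq0$ and write $\ell=(L^2)^{1/3}$. For $h<-\frac32\ell$ let $u_1\in(0,\ell)$ and $u_2\in(\ell,+\infty)$ be the unique numbers with $2u_i+\frac{L^2}{u_i^2}=-2h$, and define $C_{1,\xi}(h)$ and $C_{2,\xi}(h)$ by $$\Big(u_1+\frac{2L^2}{u_1^2}\Big)u_1=2(C_{1,\xi}(h)+1),\qquad \Big(u_2+\frac{2L^2}{u_2^2}\Big)u_2=2(C_{2,\xi}(h)+1);$$ at $h=-\frac32\ell$ set $C_{1,\xi}(h)=C_{2,\xi}(h)=\frac32\ell^2-1$ (the limiting value). Then for every $h\in(-\infty,-\frac32\ell]$ one has $C_{1,\xi}(h)\le C_{2,\xi}(h)$, with equality if and only if $h=-\frac32\ell$.
   Context: Equivalently, $C_{1,\xi}(h)$ (resp. $C_{2,\xi}(h)$) is the value of $c$ for which the cubic $f(u)=u^3+2hu^2+2(c+1)u-L^2$ has a double positive root smaller (resp. larger) than its simple root. *)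

(* Defs.v *)
From Stdlib Require Import Reals Lra ClassicalEpsilon.
Open Scope R_scope.

Definition ell (L : R) : R := Rpower (L ^ 2) (1 / 3).

Definition u1 (L h : R) : R :=
  epsilon (inhabits 0)
    (fun u => 0 < u < ell L /\ 2 * u + L ^ 2 / u ^ 2 = - 2 * h).

Definition u2 (L h : R) : R :=
  epsilon (inhabits 0)
    (fun u => ell L < u /\ 2 * u + L ^ 2 / u ^ 2 = - 2 * h).

Definition C_of (L u : R) : R := (u + 2 * L ^ 2 / u ^ 2) * u / 2 - 1.

(* For h < -3/2 ell use u_1 / u_2; otherwise (in particular at h = -3/2 ell)
   the limiting value 3/2 ell^2 - 1.  Values for h > -3/2 ell are irrelevant. *)
Definition C1xi (L h : R) : R :=
  if Rlt_dec h (- (3 / 2) * ell L) then C_of L (u1 L h)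
  else 3 / 2 * ell L ^ 2 - 1.

Definition C2xi (L h : R) : R :=
  if Rlt_dec h (- (3 / 2) * ell L) then C_of L (u2 L h)
  else 3 / 2 * ell L ^ 2 - 1.

(* Main.v *)
Require Import Defs.
From Stdlib Require Import Reals Lra Psatz ClassicalEpsilon.
Open Scope R_scope.

Lemma ell_pos L : L <> 0 -> 0 < ell L.
Proof. intros; unfold ell, Rpower; apply exp_pos. Qed.

Lemma ell_cube L : L <> 0 -> ell L ^ 3 = L ^ 2.
Proof.
  intros HL. assert (H2 : 0 < L ^ 2) by (assert (L*L > 0) by (destruct (Rlt_dec L 0); nra); simpl; lra).
  rewrite <- (Rpower_pow 3 (ell L)) by (apply ell_pos; auto).
  unfold ell. rewrite Rpower_mult. simpl INR.
  replace (1/3 * (1+1+1)) with 1 by field. apply Rpower_1; auto.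
Qed.

Lemma key_eq L u k : 0 < u -> 2 * u + L ^ 2 / u ^ 2 = k -> L ^ 2 = k * u ^ 2 - 2 * u ^ 3.
Proof. intros Hu H. subst k. field. lra. Qed.

Lemma C_eq L u k : 0 < u -> 2 * u + L ^ 2 / u ^ 2 = k ->
  C_of L u = (2 * k * u - 3 * u ^ 2) / 2 - 1.
Proof.
  intros Hu H. pose proof (key_eq L u k Hu H) as E. unfold C_of.
  rewrite E. field. lra.
Qed.

Lemma u1_spec L h : L <> 0 -> h < - (3/2) * ell L ->
  0 < u1 L h < ell L /\ 2 * u1 L h + L ^ 2 / u1 L h ^ 2 = - 2 * h.
Proof.
  intros HL Hh. unfold u1. apply epsilon_spec.
  pose proof (ell_pos L HL) as He. pose proof (ell_cube L HL) as Ec.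
  set (e := ell L) in *.
  set (p := fun u => - (2 * u ^ 3 + 2 * h * u ^ 2 + L ^ 2)).
  set (a := e ^ 2 / (- 2 * h)).
  assert (Ha : 0 < a < e).
  { unfold a. split. apply Rdiv_lt_0_compat; nra.
    apply Rmult_lt_reg_r with (-2*h). lra. field_simplify; nra. }
  assert (pa : p a < 0).
  { unfold p. rewrite <- Ec. unfold a.
    assert (-2*h > 3*e) by lra.
    set (k := -2*h) in *. replace h with (-k/2) by (unfold k; field).
    field_simplify; [| lra].
    apply Rmult_lt_reg_r with (k^3). apply pow_lt; lra.
    field_simplify; [| lra]. 
    assert (0 < e^6) by (apply pow_lt; lra).
    assert (0 < e^3) by (apply pow_lt; lra).
    nra. }
  assert (pe : 0 < p e).
  { unfold p. rewrite <- Ec. assert (0 < e^2) by (apply pow_lt; lra). nra. }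
  assert (cp : continuity p).
  { unfold p. reg. }
  destruct (IVT p a e cp (proj2 Ha) pa pe) as [z [Hz1 Hz2]].
  exists z.
  assert (z <> a) by (intro; subst; lra).
  assert (z <> e) by (intro; subst; lra).
  split. lra.
  unfold p in Hz2. field_simplify; [|lra].
  assert (0 < z^2) by (apply pow_lt; lra).
  apply Rmult_eq_reg_r with (z^2); [|lra]. field_simplify; [|lra]. nra.
Qed.

Lemma u2_spec L h : L <> 0 -> h < - (3/2) * ell L ->
  ell L < u2 L h /\ 2 * u2 L h + L ^ 2 / u2 L h ^ 2 = - 2 * h.
Proof.
  intros HL Hh. unfold u2. apply epsilon_spec.
  pose proof (ell_pos L HL) as He. pose proof (ell_cube L HL) as Ec.
  set (e := ell L) in *.
  set (p := fun u => (2 * u ^ 3 + 2 * h * u ^ 2 + L ^ 2)).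
  assert (pe : p e < 0).
  { unfold p. rewrite <- Ec. assert (0 < e^2) by (apply pow_lt; lra). nra. }
  assert (pb : 0 < p (-h)).
  { unfold p. rewrite <- Ec. assert (0 < e^3) by (apply pow_lt; lra). nra. }
  assert (cp : continuity p).
  { unfold p. reg. }
  destruct (IVT p e (-h) cp ltac:(lra) pe pb) as [z [Hz1 Hz2]].
  exists z.
  assert (z <> e) by (intro; subst; lra).
  split. lra.
  unfold p in Hz2.
  assert (0 < z^2) by (apply pow_lt; lra).
  apply Rmult_eq_reg_r with (z^2); [|lra]. field_simplify; [|lra]. nra.
Qed.

Lemma strict L h : L <> 0 -> h < - (3/2) * ell L -> C1xi L h < C2xi L h.
Proof.
  intros HL Hh. unfold C1xi, C2xi. destruct (Rlt_dec h _); [|lra].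
  destruct (u1_spec L h HL Hh) as [[A1 B1] E1].
  destruct (u2_spec L h HL Hh) as [A2 E2].
  set (x := u1 L h) in *. set (y := u2 L h) in *.
  rewrite (C_eq L x _ A1 E1), (C_eq L y _ ltac:(lra) E2).
  pose proof (key_eq L x _ A1 E1). pose proof (key_eq L y _ ltac:(lra) E2).
  set (k := -2*h) in *.
  assert (R1 : k * (x + y) = 2 * (x^2 + x*y + y^2)).
  { assert (k*(y^2 - x^2) = 2*(y^3 - x^3)) by nra.
    apply Rmult_eq_reg_r with (y - x); [|lra]. nra. }
  assert (R2 : (x + y) * (2*k - 3*(x+y)) = (y-x)^2) by nra.
  assert (0 < (y-x)^2) by (apply pow_lt; lra).
  assert (0 < 2*k - 3*(x+y)) by nra.
  nra.
Qed.

Theorem lemma5p1 (L h : R) :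
  L <> 0 -> h <= - (3 / 2) * ell L ->
  C1xi L h <= C2xi L h /\ (C1xi L h = C2xi L h <-> h = - (3 / 2) * ell L).
Proof.
  intros HL Hh. destruct (Req_dec h (- (3/2) * ell L)) as [E|E].
  - assert (C1xi L h = C2xi L h).
    { unfold C1xi, C2xi. destruct (Rlt_dec h _); [lra|reflexivity]. }
    split; [lra|split; auto].
  - pose proof (strict L h HL ltac:(lra)). split; [lra|split; intro; lra].
Qed.
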